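(* Let $\mathbb V$ be a $k$-module over a linear space $\mathbb W$ admitting a $\mu$-multiplicative basis $\mathfrak B=\{v_i\}_{i\in I}$ with respect to the basis $\mathfrak B'=\{w_j\}_{j\in J}$ of $\mathbb W$. Then $\mathbb V$ is minimal if and only if all elements of $I$ are connected to each other (i.e. $I/\sim$ consists of a single class).
   Context: Fix integers $n\ge 2$ and $1\le k\le n$ and an arbitrary field $\mathbb F$; $S_n$ denotes the symmetric group on $n$ letters. A $k$-module over a linear space $\mathbb W$ is an $\mathbb F$-vector space $\mathbb V$ (the dimensions of $\mathbb V$ and $\mathbb W$ are arbitrary, possibly infinite) together with, for every $\sigma\in S_n$, an $n$-linear map $\mathbb V^k\times\mathbb W^{n-k}\to\mathbb V$, $(x_1,\dots,x_k,y_{k+1},\dots,y_n)\mapsto[x_1,\dots,x_k,y_{k+1},\dots,y_n]_\sigma$ (interpreted as an $n$-ary bracket in which the $l$-th argument is placed in position $\sigma(l)$). A $k$-submodule of $\mathbb V$ is a linear subspace $U$ such that $[u,x_2,\dots,x_k,y_{k+1},\dots,y_n]_\sigma\in U$ for all $\sigma\in S_n$, $u\in U$, $x_l\in\mathbb V$, $y_l\in\mathbb W$. A basis $\mathfrak B=\{v_i\}_{i\in I}$ of $\mathbb V$ is multiplicative (with respect to a basis $\mathfrak B'=\{w_j\}_{j\in J}$ of $\mathbb W$) if for all $\sigma\in S_n$, $i_1,\dots,i_k\in I$, $j_{k+1},\dots,j_n\in J$, the element $[v_{i_1},\dots,v_{i_k},w_{j_{k+1}},\dots,w_{j_n}]_\sigma$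 lies in $\mathbb F v_r$ for some $r\in I$. A $k$-submodule $U$ admits a multiplicative basis inherited from $\mathfrak B$ if some subset of $\mathfrak B$ is a basis of $U$. $\mathbb V$ (with multiplicative basis $\mathfrak B$) is minimal if the only nonzero $k$-submodule of $\mathbb V$ admitting a multiplicative basis inherited from $\mathfrak B$ is $\mathbb V$ itself. Index machinery: let $\overline I=\{\overline i:i\in I\}$ and $\overline J=\{\overline j:j\in J\}$ be sets of new symbols disjoint from $I$ and $J$, with the convention $\overline{\overline x}=x$. For $\sigma\in S_n$, $i_1,\dots,i_k\in I$, $j_{k+1},\dots,j_n\in J$, let $a_\sigma(i_1,\dots,i_k,j_{k+1},\dots,j_n)=\emptyset$ if $[v_{i_1},\dots,v_{i_k},w_{j_{k+1}},\dots,w_{j_n}]_\sigma=0$ and $=\{r\}$ if this bracket is a nonzero element of $\mathbb F v_r$. For $i,i_2,\dots,i_k\in I$, $j_{k+1},\dots,j_n\in J$ let $b_\sigma(i,\overline i_2,\dots,\overline i_k,\overline j_{k+1},\dots,\overline j_n)=\{i'\in I: a_\sigma(i',i_2,\dots,i_k,j_{k+1},\dots,j_n)=\{i\}\}$. For $i\in I$, $X=(x_2,\dots,x_k)\in(I\,\dot\cup\,\overline I)^{k-1}$, $Y=(y_{k+1},\dots,y_n)\in(J\,\dot\cup\,\overline J)^{n-k}$ define $\mu(i,X,Y)\subseteq I$ by: $\mu(i,X,Y)=\bigcup_{\sigma\in S_n}a_\sigma(i,X,Y)$ if all $x_l\in I$ and all $y_l\in J$; $\mu(i,X,Y)=\bigcup_{\sigma\in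 S_n}b_\sigma(i,X,Y)$ if all $x_l\in\overline I$ and all $y_l\in\overline J$; and $\mu(i,X,Y)=\emptyset$ otherwise. For $\mathfrak A\subseteq I$ set $\phi(\mathfrak A,X,Y)=\bigcup_{i\in\mathfrak A}\mu(i,X,Y)$. $\mu$-multiplicativity: a multiplicative basis $\mathfrak B$ is $\mu$-multiplicative if whenever $i,i'\in I$ satisfy $i'\in\mu(i,X,Y)$ for some $X\in(I\,\dot\cup\,\overline I)^{k-1}$, $Y\in(J\,\dot\cup\,\overline J)^{n-k}$, then $v_{i'}$ belongs to the linear span of $\{[v_i,x_2,\dots,x_k,y_{k+1},\dots,y_n]_\sigma:\sigma\in S_n,\ x_l\in\mathbb V,\ y_l\in\mathbb W\}$. Connections: for distinct $i,i'\in I$, a connection from $i$ to $i'$ is a finite sequence $(X_1,Y_1,\dots,X_t,Y_t)$, $t\ge1$, with $X_m\in(I\,\dot\cup\,\overline I)^{k-1}$ and $Y_m\in(J\,\dot\cup\,\overline J)^{n-k}$, such that, setting $\mathfrak A_0=\{i\}$ and $\mathfrak A_m=\phi(\mathfrak A_{m-1},X_m,Y_m)$, one has $\mathfrak A_m\neq\emptyset$ for $1\le m\le t-1$ and $i'\in\mathfrak A_t$. We say $i$ is connected to $i'$ if such a connection exists; by convention every $i\in I$ is connected to itself. This relation, written $i\sim i'$, is an equivalence relation on $I$. *)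

(* Defs.v *)
From HB Require Import structures.
From mathcomp Require Import all_boot all_order all_algebra all_fingroup.
Set Implicit Arguments. Unset Strict Implicit. Unset Printing Implicit Defensive.
Import GRing.Theory.
Local Open Scope ring_scope.

Inductive span (F : fieldType) (V : lmodType F) (A : V -> Prop) : V -> Prop :=
  | span_zero : span A 0
  | span_in : forall x, A x -> span A x
  | span_add : forall x y, span A x -> span A y -> span A (x + y)
  | span_scale : forall (c : F) x, span A x -> span A (c *: x).

Definition is_basis_on (F : fieldType) (V : lmodType F) (I : eqType)
    (S : I -> Prop) (v : I -> V) (U : V -> Prop) : Prop :=
  (forall (s : seq I) (c : I -> F), uniq s -> (forall i, i \in s -> S i) ->
      \sum_(i <- s) c i *: v i = 0 -> forall i, i \in s -> c i = 0)
  /\ (forall x, U x <-> span (fun y => exists2 i, S i & y = v i) x).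

Definition is_basis (F : fieldType) (V : lmodType F) (I : eqType) (v : I -> V) :=
  is_basis_on (fun _ => True) v (fun _ => True).

Definition upd (T : Type) (m : nat) (f : 'I_m -> T) (l : 'I_m) (z : T) : 'I_m -> T :=
  fun j => if j == l then z else f j.

Section KModule.
Variables (F : fieldType) (V W : lmodType F) (n k : nat).
(* The bracket [x_1, x_2..x_k, y_{k+1}..y_n]_sigma : first V-argument x_1,
   remaining V-arguments indexed by 'I_(k-1), W-arguments by 'I_(n-k). *)
Variable br : 'S_n -> V -> ('I_(k.-1) -> V) -> ('I_(n - k) -> W) -> V.

Definition multilinear : Prop :=
  (forall s (a : F) x x' X Y, br s (a *: x + x') X Y = a *: br s x X Y + br s x' X Y)
  /\ (forall s x X Y l (a : F) z z',
        br s x (upd X l (a *: z + z')) Y = a *: br s x (upd X l z) Y + br s x (upd X l z') Y)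
  /\ (forall s x X Y l (a : F) z z',
        br s x X (upd Y l (a *: z + z')) = a *: br s x X (upd Y l z) + br s x X (upd Y l z')).

Definition is_subspace (U : V -> Prop) : Prop :=
  U 0 /\ (forall x y, U x -> U y -> U (x + y)) /\ (forall (c : F) x, U x -> U (c *: x)).

Definition k_submodule (U : V -> Prop) : Prop :=
  is_subspace U /\ (forall s u X Y, U u -> U (br s u X Y)).

Variables (I J : eqType) (v : I -> V) (w : J -> W).

Definition multiplicative : Prop :=
  forall s (i : I) (Xs : 'I_(k.-1) -> I) (Ys : 'I_(n - k) -> J),
    exists (r : I) (c : F), br s (v i) (v \o Xs) (w \o Ys) = c *: v r.

Definition admits_inherited_basis (U : V -> Prop) : Prop :=
  exists S : I -> Prop, is_basis_on S v U.

Definition minimal : Prop :=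
  forall U, k_submodule U -> (exists2 x, U x & x <> 0) -> admits_inherited_basis U ->
    forall x, U x.

Definition a_set s (i : I) (Xs : 'I_(k.-1) -> I) (Ys : 'I_(n - k) -> J) (r : I) : Prop :=
  br s (v i) (v \o Xs) (w \o Ys) <> 0 /\
  exists c : F, br s (v i) (v \o Xs) (w \o Ys) = c *: v r.

Definition b_set s (i : I) (Xs : 'I_(k.-1) -> I) (Ys : 'I_(n - k) -> J) (i' : I) : Prop :=
  forall r, a_set s i' Xs Ys r <-> r = i.

(* Symbols: inl x = x in I (resp. J), inr x = bar x in bar I (resp. bar J). *)
Definition mu (i : I) (X : 'I_(k.-1) -> I + I) (Y : 'I_(n - k) -> J + J) (r : I) : Prop :=
  (exists (Xs : 'I_(k.-1) -> I) (Ys : 'I_(n - k) -> J),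
     (forall l, X l = inl (Xs l)) /\ (forall l, Y l = inl (Ys l)) /\
     exists s, a_set s i Xs Ys r)
  \/
  (exists (Xs : 'I_(k.-1) -> I) (Ys : 'I_(n - k) -> J),
     (forall l, X l = inr (Xs l)) /\ (forall l, Y l = inr (Ys l)) /\
     exists s, b_set s i Xs Ys r).

Definition phi (A : I -> Prop) X Y (r : I) : Prop := exists2 i, A i & mu i X Y r.

Definition mu_multiplicative : Prop :=
  forall (i i' : I) X Y, mu i X Y i' ->
    span (fun y => exists s (Xv : 'I_(k.-1) -> V) (Yw : 'I_(n - k) -> W),
                      y = br s (v i) Xv Yw) (v i').

(* conn_path A [:: (X_1,Y_1); ...; (X_t,Y_t)] i' : starting from A_0 = A,
   A_m nonempty for 1 <= m <= t-1 and i' in A_t. *)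
Fixpoint conn_path (A : I -> Prop)
    (p : seq (('I_(k.-1) -> I + I) * ('I_(n - k) -> J + J))) (i' : I) : Prop :=
  match p with
  | [::] => False
  | [:: XY] => phi A XY.1 XY.2 i'
  | XY :: p' => (exists r, phi A XY.1 XY.2 r) /\ conn_path (phi A XY.1 XY.2) p' i'
  end.

Definition connected (i i' : I) : Prop :=
  i = i' \/ exists p, conn_path (fun r => r = i) p i'.

End KModule.

(* Main.v *)
From Pilot Require Import Defs.
From HB Require Import structures.
From mathcomp Require Import all_boot all_order all_algebra all_fingroup.
From Stdlib Require Import Classical ClassicalEpsilon FunctionalExtensionality.
Set Implicit Arguments. Unset Strict Implicit. Unset Printing Implicit Defensive.
Import GRing.Theory.
Local Open Scope ring_scope.

Definition Rep (F : fieldType) (V : lmodType F) (I : eqType) (S : I -> Prop)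
  (v : I -> V) (x : V) : Prop :=
  exists (s : seq I) (c : I -> F), uniq s /\ (forall j, j \in s -> S j) /\
    x = \sum_(j <- s) c j *: v j.

Lemma rep_ins (F : fieldType) (V : lmodType F) (I : eqType) (S : I -> Prop)
  (v : I -> V) (s : seq I) (c : I -> F) (a : F) (j0 : I) :
  uniq s -> (forall j, j \in s -> S j) -> S j0 ->
  Rep S v (\sum_(j <- s) c j *: v j + a *: v j0).
Proof.
move=> us Ss Sj0; case: (boolP (j0 \in s)) => Hin.
- exists s, (fun j => if j == j0 then c j + a else c j); split=> //; split=> //.
  rewrite !(perm_big _ (perm_to_rem Hin)) !big_cons eqxx scalerDl.
  rewrite (@eq_big_seq _ _ _ _ _ (fun j => (if j == j0 then c j + a else c j) *: v j)
     (fun j => c j *: v j)); last first.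
    move=> j; rewrite (mem_rem_uniq _ us) inE => /andP [/negbTE -> _] //.
  exact: addrAC.
- exists (j0 :: s), (fun j => if j == j0 then a else c j); split.
    by rewrite /= Hin us.
  split. by move=> j; rewrite inE => /orP [/eqP -> | ]; auto.
  rewrite big_cons eqxx addrC; congr (_ + _).
  apply: eq_big_seq => j js; case: eqP => // E; subst j; by rewrite js in Hin.
Qed.

Lemma rep_add (F : fieldType) (V : lmodType F) (I : eqType) (S : I -> Prop)
  (v : I -> V) (s2 : seq I) (c2 : I -> F) :
  (forall j, j \in s2 -> S j) -> forall x, Rep S v x ->
  Rep S v (x + \sum_(j <- s2) c2 j *: v j).
Proof.
elim: s2 => [|j s2 IH] Hs x Hx; first by rewrite big_nil addr0.
rewrite big_cons addrA; apply: IH.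
  by move=> i is2; apply: Hs; rewrite inE is2 orbT.
case: Hx => s [c [us [Ss ->]]]; apply: rep_ins => //.
by apply: Hs; rewrite inE eqxx.
Qed.

Lemma span_rep (F : fieldType) (V : lmodType F) (I : eqType) (S : I -> Prop)
  (v : I -> V) x :
  Defs.span (fun y => exists2 j, S j & y = v j) x -> Rep S v x.
Proof.
elim=> {x} [| x [j Sj ->] | x y _ Hx _ [s [c [us [Ss ->]]]] | a x _ [s [c [us [Ss ->]]]]].
- by exists [::], (fun _ => 0); rewrite big_nil.
- have := @rep_ins _ _ _ S v [::] (fun _ => 0) 1 j isT.
  by rewrite big_nil add0r scale1r; apply.
- exact: rep_add.
- exists s, (fun j => a * c j); split=> //; split=> //.
  rewrite scaler_sumr; apply: eq_bigr => j _; by rewrite scalerA.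
Qed.

Lemma rep_mem (F : fieldType) (V : lmodType F) (I : eqType) (S : I -> Prop)
  (v : I -> V) r : is_basis v -> Rep S v (v r) -> S r.
Proof.
move=> [ind _] [s [c [us [Ss E]]]].
apply: NNPP => nS.
have rs : r \notin s by apply/negP => /Ss.
have := ind (r :: s) (fun j => if j == r then -1 else c j).
have H0 : \sum_(j <- r :: s) (if j == r then -1 else c j) *: v j = 0.
  rewrite big_cons eqxx scaleN1r.
  rewrite (@eq_big_seq _ _ _ _ _ _ (fun j => c j *: v j)); first by rewrite -E addNr.
  move=> j js; case: eqP => // Ej; subst j; by rewrite js in rs.
move=> /(_ _ _ H0 r); rewrite /= rs us eqxx inE eqxx => /(_ isT (fun _ _ => Logic.I) isT).
move/eqP; by rewrite oppr_eq0 oner_eq0.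
Qed.

Lemma double0 (F : fieldType) (V : lmodType F) (x : V) : x = x + x -> x = 0.
Proof. move=> h; have := congr1 (fun z => z - x) h; rewrite /= subrr addrK => ->. by []. Qed.

Lemma span_sub (F : fieldType) (V : lmodType F) (A U : V -> Prop) x :
  is_subspace U -> (forall y, A y -> U y) -> Defs.span A x -> U x.
Proof.
move=> [U0 [UD UZ]] AU; elim=> {x} [| x /AU | x y _ Hx _ Hy | c x _ Hx] //.
- exact: UD.
- exact: UZ.
Qed.

Lemma span_mono (F : fieldType) (V : lmodType F) (A B : V -> Prop) x :
  (forall y, A y -> B y) -> Defs.span A x -> Defs.span B x.
Proof.
move=> AB; elim=> {x} [| x /AB | x y _ Hx _ Hy | c x _ Hx].
- exact: span_zero.
- exact: span_in.
- exact: span_add.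
- exact: span_scale.
Qed.

Lemma multi_ind (F : fieldType) (T : lmodType F) (K : Type) (e : K -> T) (m : nat)
  (G : ('I_m -> T) -> Prop) :
  (forall x, Defs.span (fun y => exists2 kk, True & y = e kk) x) ->
  (forall X l, G (upd X l 0)) ->
  (forall X l (a : F) z z', G (upd X l z) -> G (upd X l z') -> G (upd X l (a *: z + z'))) ->
  (forall Xs : 'I_m -> K, G (e \o Xs)) -> forall X, G X.
Proof.
move=> Hsp H0 Hlin Hbase.
have Q : forall p, forall X, (forall l : 'I_m, (p <= l)%N -> exists kk, X l = e kk) -> G X.
  elim=> [|p IH] X HX.
    pose Xs := fun l => proj1_sig (constructive_indefinite_description _ (HX l (leq0n _))).
    have -> : X = e \o Xs.
      apply: functional_extensionality => l; rewrite /Xs /=.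
      by case: (constructive_indefinite_description _ _).
    exact: Hbase.
  case: (ltnP p m) => hp; last first.
    apply: IH => l hl; exfalso; have := ltn_ord l; rewrite ltnNge.
    by rewrite (leq_trans hp hl).
  pose l0 := Ordinal hp.
  have -> : X = upd X l0 (X l0).
    apply: functional_extensionality => l; rewrite /upd; case: eqP => // -> //.
  have : Defs.span (fun y => exists2 kk, True & y = e kk) (X l0) := Hsp _.
  elim=> [| x [kk _ ->] | x y _ Hx _ Hy | c x _ Hx].
  - exact: H0.
  - apply: IH => l hl; rewrite /upd; case: eqP => [_|/eqP ne]; first by exists kk.
    apply: HX; rewrite ltn_neqAle hl andbT; apply: contra ne => /eqP E.
    by apply/eqP/val_inj; rewrite /= E.
  - rewrite -(scale1r x); exact: Hlin.
  - rewrite -(addr0 (c *: x)); apply: Hlin => //; exact: H0.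
move=> X; apply: (Q m) => l hl; exfalso; have := ltn_ord l; rewrite ltnNge hl //.
Qed.

Lemma conn_rcons (F : fieldType) (V W : lmodType F) (n k : nat)
  (br : 'S_n -> V -> ('I_(k.-1) -> V) -> ('I_(n - k) -> W) -> V)
  (I J : eqType) (v : I -> V) (w : J -> W) X Y r p :
  forall A j, conn_path br v w A p j -> mu br v w j X Y r ->
  conn_path br v w A (rcons p (X, Y)) r.
Proof.
elim: p => [|XY p IH] A j //=.
case: p IH => [|XY2 p] IH /=.
- move=> H Hm; split; first by exists j.
  by exists j.
- move=> [Hex Hc] Hm; split=> //.
  exact: (IH _ _ Hc Hm).
Qed.

Lemma conn_sub (F : fieldType) (V W : lmodType F) (n k : nat)
  (br : 'S_n -> V -> ('I_(k.-1) -> V) -> ('I_(n - k) -> W) -> V)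
  (I J : eqType) (v : I -> V) (w : J -> W) (S : I -> Prop) :
  (forall i X Y r, S i -> mu br v w i X Y r -> S r) ->
  forall p A i', (forall a, A a -> S a) -> conn_path br v w A p i' -> S i'.
Proof.
move=> HS; elim=> [|XY p IH] A i' AS //=.
have phiS : forall r, phi br v w A XY.1 XY.2 r -> S r.
  by move=> r [i Ai Hm]; apply: (HS i _ _ _ (AS _ Ai) Hm).
case: p IH => [|XY2 p] IH; first exact: phiS.
by move=> [_ Hc]; apply: (IH _ _ phiS Hc).
Qed.

Lemma basis_nz (F : fieldType) (V : lmodType F) (I : eqType) (v : I -> V) i :
  is_basis v -> v i <> 0.
Proof.
move=> [ind _] E.
have := ind [:: i] (fun _ => 1) isT (fun _ _ => Logic.I).
rewrite big_cons big_nil E scaler0 addr0 => /(_ erefl i).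
rewrite inE eqxx => /(_ isT) /eqP; by rewrite oner_eq0.
Qed.

Import Pilot.Defs.

Theorem mainTheorem9 (F : fieldType) (V W : lmodType F) (n k : nat)
    (hn : (2 <= n)%N) (hk1 : (1 <= k)%N) (hkn : (k <= n)%N)
    (br : 'S_n -> V -> ('I_(k.-1) -> V) -> ('I_(n - k) -> W) -> V)
    (I J : eqType) (v : I -> V) (w : J -> W) :
  multilinear br ->
  is_basis v -> is_basis w ->
  multiplicative br v w ->
  mu_multiplicative br v w ->
  (minimal br v <-> forall i i' : I, connected br v w i i').
Proof.
move=> Hml Bv Bw Hmult Hmu.
case: Hml => [L1 [L2 L3]].
have br0 : forall s X Y, br s 0 X Y = 0.
  move=> s X Y; apply: double0; have := L1 s 1 0 0 X Y.
  by rewrite !scale1r !addr0.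
have brX0 : forall s x X Y l, br s x (upd X l 0) Y = 0.
  move=> s x X Y l; apply: double0; have := L2 s x X Y l 1 0 0.
  by rewrite !scale1r !addr0.
have brY0 : forall s x X Y l, br s x X (upd Y l 0) = 0.
  move=> s x X Y l; apply: double0; have := L3 s x X Y l 1 0 0.
  by rewrite !scale1r !addr0.
have spv : forall x, Defs.span (fun y => exists2 kk, True & y = v kk) x.
  by move=> x; apply: (Bv.2 x).1.
have spw : forall x, Defs.span (fun y => exists2 kk, True & y = w kk) x.
  by move=> x; apply: (Bw.2 x).1.
split.
- move=> Hmin i i'.
  pose S := fun j => connected br v w i j.
  pose U := Defs.span (fun y => exists2 j, S j & y = v j).
  have Hsub : is_subspace U.
    split; first exact: span_zero.
    by split; [move=> x y; exact: span_add | move=> c x; exact: span_scale].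
  have conn_mu : forall j X Y r, S j -> mu br v w j X Y r -> S r.
    move=> j X Y r [<- | [p Hp]] Hm; right.
    + by exists [:: (X, Y)] => /=; exists i.
    + exists (rcons p (X, Y)); exact: conn_rcons Hp Hm.
  have Hk : k_submodule br U.
    split=> // s u X Y Hu.
    elim: Hu X Y => {u} [| y [j Sj ->] | x y _ Hx _ Hy | c x _ Hx] X Y.
    + rewrite br0; exact: span_zero.
    + move: X Y.
      apply: (@multi_ind _ _ _ v _ (fun X => forall Y, U (br s (v j) X Y))) => //.
      * move=> X l Y; rewrite brX0; exact: span_zero.
      * move=> X l a z z' H1 H2 Y; rewrite L2.
        by apply: span_add; [apply: span_scale; exact: H1 | exact: H2].
      * move=> Xs.
        apply: (@multi_ind _ _ _ w _ (fun Y => U (br s (v j) (v \o Xs) Y))) => //.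
        -- move=> Y l; rewrite brY0; exact: span_zero.
        -- move=> Y l a z z' H1 H2; rewrite L3.
           by apply: span_add; [apply: span_scale; exact: H1 | exact: H2].
        -- move=> Ys; case: (Hmult s j Xs Ys) => r [c E].
           case: (eqVneq (br s (v j) (v \o Xs) (w \o Ys)) 0) => [->|nz].
             exact: span_zero.
           rewrite E; apply: span_scale; apply: span_in; exists r => //.
           apply: (conn_mu j (fun l => inl (Xs l)) (fun l => inl (Ys l))) => //.
           left; exists Xs, Ys; split=> //; split=> //; exists s; split.
             exact/eqP.
           by exists c.
    + rewrite -(scale1r x) L1 scale1r; apply: span_add; [exact: Hx | exact: Hy].
    + rewrite -(addr0 (c *: x)) L1 br0 addr0; apply: span_scale; exact: Hx.
  have Hvi : U (v i) by apply: span_in; exists i => //; left.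
  have HU : U (v i').
    apply: Hmin => //.
      by exists (v i) => //; apply: basis_nz.
    exists S; split => //.
    move=> s0 c0 us _; apply: Bv.1 => //.
  exact: (rep_mem Bv (span_rep HU)).
- move=> Hall U HkU [x Ux nx] [S [_ HUS]] y.
  have [i0 Si0] : exists i0, S i0.
    apply: NNPP => hno; apply: nx.
    have Hz : is_subspace (fun z : V => z = 0).
      split=> //; split; [by move=> a b -> ->; rewrite addr0 | by move=> c a ->; rewrite scaler0].
    apply: (span_sub Hz _ ((HUS x).1 Ux)) => z [j Sj _].
    by exfalso; apply: hno; exists j.
  have Ssub : forall j X Y r, S j -> mu br v w j X Y r -> S r.
    move=> j X Y r Sj Hm.
    have Uvj : U (v j) by apply: (HUS _).2; apply: span_in; exists j.
    have Uvr : U (v r).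
      apply: (span_sub HkU.1 _ (Hmu j r X Y Hm)).
      by move=> z [s0 [Xv [Yw ->]]]; apply: HkU.2.
    exact: (rep_mem Bv (span_rep ((HUS _).1 Uvr))).
  have allS : forall i', S i'.
    move=> i'; case: (Hall i0 i') => [<- | [p Hp]] //.
    exact: (conn_sub Ssub (fun a (ha : a = i0) => ltac:(rewrite ha; exact: Si0)) Hp).
  apply: (HUS y).2; apply: (span_mono _ (spv y)).
  by move=> z [j _ ->]; exists j.
Qed.
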